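(* Let $k$ be a positive integer, let $n_1,\ldots,n_k,d_1,\ldots,d_k$ be positive integers, and let $r_1,\ldots,r_k$ be integers with $0\le r_i\le d_i$ for all $i$ and $0<\sum_i r_i<\sum_i d_i$. Suppose one of the following holds: (1) $k=1$, $n_1,d_1\ge 2$, and $(n_1,d_1)\neq(2,2)$; (2) $k=2$, and if $n_1=n_2=1$ then $d_1,d_2\ge 2$; (3) $k\ge 3$. Then $$\prod_{i=1}^k\binom{n_i+r_i}{n_i}+\prod_{i=1}^k\binom{n_i+d_i-r_i}{n_i}<\prod_{i=1}^k\binom{n_i+d_i}{n_i}.$$ *)

(* Defs.v *)
From mathcomp Require Import all_boot.
Set Implicit Arguments. Unset Strict Implicit. Unset Printing Implicit Defensive.

(* Main.v *)
Require Import Defs.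
From mathcomp Require Import all_boot zify.
Set Warnings "-notation-overridden".

Definition g n m := 'C(n + m, n).

Lemma g0 n : g n 0 = 1.
Proof. by rewrite /g addn0 binn. Qed.

Lemma gz m : g 0 m = 1.
Proof. by rewrite /g bin0. Qed.

Lemma gS p m : g p.+1 m.+1 = g p.+1 m + 'C(p.+1 + m, p).
Proof. by rewrite /g addnS binS. Qed.

Lemma g_ge n m : 0 < n -> m.+1 <= g n m.
Proof.
case: n => [//|p] _; elim: m => [|m IH]; first by rewrite g0.
rewrite gS; have : 0 < 'C(p.+1 + m, p) by rewrite bin_gt0; lia.
lia.
Qed.

Lemma g_mono n m m' : m <= m' -> g n m <= g n m'.
Proof. by move=> h; rewrite /g; apply: leq_bin2l; rewrite leq_add2l. Qed.

Lemma g_ge_n n m : 0 < m -> n.+1 <= g n m.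
Proof.
move=> hm; have := @g_mono n 1 m hm; rewrite /g addn1 binSn //.
Qed.

Lemma incmono p m m' : m <= m' -> 'C(p.+1 + m, p) <= 'C(p.+1 + m', p).
Proof. by move=> h; apply: leq_bin2l; rewrite leq_add2l. Qed.

Lemma incstrict q m m' : m < m' -> 'C(q.+2 + m, q.+1) < 'C(q.+2 + m', q.+1).
Proof.
move=> h; rewrite -(subnKC h); move: (m' - m.+1) => e.
have -> : q.+2 + (m.+1 + e) = (q.+2 + (m + e)).+1 by lia.
rewrite binS.
have := @incmono q.+1 m (m + e) (leq_addr _ _).
have : 0 < 'C(q.+2 + (m + e), q) by rewrite bin_gt0; lia.
lia.
Qed.

Arguments incmono p {m m'}.
Arguments incstrict q {m m'}.

Lemma superadd n r s : g n r + g n s <= g n (r + s) + 1.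
Proof.
case: n => [|p]; first by rewrite !gz.
elim: s => [|s IH]; first by rewrite g0 addn0.
rewrite [r + s.+1]addnS !gS.
have := incmono p (leq_addl r s).
lia.
Qed.

Lemma strict1 n r s : 1 < n -> 0 < r -> g n r + g n s.+1 <= g n (r + s.+1).
Proof.
case: n => [|[|q]] // _ hr.
elim: s => [|s IH].
  rewrite addn1 !gS g0.
  have := incstrict q (m:=0) (m':=r) hr. rewrite addn0. lia.
rewrite [r + s.+2]addnS (gS q.+1 s.+1) (gS q.+1 (r + s.+1)).
have := incmono q.+1 (leq_addl r s.+1).
lia.
Qed.

Lemma strict2 n r s : 1 < n -> 0 < r -> g n r + g n s.+2 < g n (r + s.+2).
Proof.
case: n => [|[|q]] // hn hr.
rewrite [r + s.+2]addnS (gS q.+1 s.+1) (gS q.+1 (r + s.+1)).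
have := @strict1 q.+2 r s hn hr.
have : s.+1 < r + s.+1 by lia.
move/(incstrict q).
lia.
Qed.

Lemma d11 n : 2 < n -> g n 1 + g n 1 < g n 2.
Proof.
case: n => [|[|[|w]]] // _.
rewrite (gS w.+2 1) /g !addn1 binSn.
rewrite addSn addnS binS binSn.
rewrite (binS w.+2 w) binSn.
have : 0 < 'C(w.+2, w) by rewrite bin_gt0; lia.
lia.
Qed.

Lemma case1 n d r : 1 < n -> 1 < d -> ~ (n = 2 /\ d = 2) -> 0 < r -> r < d ->
  g n r + g n (d - r) < g n d.
Proof.
move=> hn hd hnd hr hrd.
have E : d = r + (d - r) by lia.
move: (d - r) E => s E; subst d.
case: s hrd hd hnd => [|[|s]] hrd hd hnd; first by lia.
- case: r hr hrd hd hnd => [|[|r]] // _ _ _ hnd.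
  + apply: d11; lia.
  + rewrite addnC [r.+2 + 1]addnC; exact: strict2.
- exact: strict2.
Qed.

Lemma blk (X Y Z x y z s t : nat) : 0 < X -> 0 < Y -> 0 < x -> 0 < y ->
  X + Y + s <= Z + 1 -> x + y + t <= z + 1 ->
  x * X + y * Y + ((x - 1) * (Y - 1) + (y - 1) * (X - 1) + (x + y - 1) * s + t * Z)
   <= z * Z + 1.
Proof.
case: X => // X; case: Y => // Y; case: x => // x; case: y => // y _ _ _ _ h1 h2.
rewrite !subn1 /=.
have h3 : (x.+1 + y.+1 + t - 1) * Z <= z * Z by apply: leq_mul; lia.
have h4 : (x.+1 + y.+1 - 1) * (X.+1 + Y.+1 + s - 1) <= (x.+1 + y.+1 - 1) * Z by apply: leq_mul; lia.
nia.
Qed.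

Lemma fin2 x0 y0 z0 x1 y1 z1 : 0 < y0 -> 0 < x1 ->
  x0 + y0 <= z0 + 1 -> x1 + y1 <= z1 + 1 -> 2 <= x0 -> 2 <= y1 ->
  (x0 = 2 -> y1 = 2 -> 2 <= y0 /\ 2 <= x1) -> x0 * x1 + y0 * y1 < z0 * z1.
Proof.
move=> h1 h2 h3 h4 h5 h6 h7.
have := @blk x1 y1 z1 x0 y0 z0 0 0 h2 (ltnW h6) (ltnW h5) h1 ltac:(lia) ltac:(lia).
rewrite !muln0 !mul0n !addn0.
have [[e1 e2]|ne] : (x0 = 2 /\ y1 = 2) \/ (3 <= x0 \/ 3 <= y1) by lia.
- have [h8 h9] := h7 e1 e2.
  have : 1 <= (y0 - 1) * (x1 - 1) by rewrite muln_gt0; lia.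
  subst; lia.
- have : 2 <= (x0 - 1) * (y1 - 1).
    case: ne => ne.
    + have : 2 * 1 <= (x0 - 1) * (y1 - 1) by apply: leq_mul; lia.
      lia.
    + have : 1 * 2 <= (x0 - 1) * (y1 - 1) by apply: leq_mul; lia.
      lia.
  lia.
Qed.

Lemma fin3 xi yi zi xj yj zj X Y Z : 2 <= xi -> 0 < yi -> 0 < xj -> 2 <= yj ->
  xi + yi <= zi + 1 -> xj + yj <= zj + 1 -> 0 < X -> 0 < Y -> X + Y <= Z + 1 ->
  (2 <= X \/ 2 <= Y) ->
  xi * (xj * X) + yi * (yj * Y) < zi * (zj * Z).
Proof.
move=> h1 h2 h3 h4 h5 h6 h7 h8 h9 h10.
have B := @blk X Y Z xj yj zj 0 0 h7 h8 h3 (ltnW h4) ltac:(lia) ltac:(lia).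
rewrite !muln0 !mul0n !addn0 in B.
set sB := (xj - 1) * (Y - 1) + (yj - 1) * (X - 1) in B.
have P1 : 0 < xj * X by rewrite muln_gt0; lia.
have P2 : 0 < yj * Y by rewrite muln_gt0; lia.
have := @blk (xj * X) (yj * Y) (zj * Z) xi yi zi sB 0 P1 P2 (ltnW h1) h2 ltac:(lia) ltac:(lia).
rewrite !mul0n !addn0.
have : 2 <= (xi - 1) * (yj * Y - 1) + (xi + yi - 1) * sB.
  set A := (xi - 1) * (yj * Y - 1); set C := (xi + yi - 1) * sB.
  have [hY|hY] : 2 <= Y \/ Y = 1 by lia.
  - have : 2 * 2 <= yj * Y by apply: leq_mul.
    move=> hh.
    have : 1 * 3 <= A by apply: leq_mul; lia.
    lia.
  - have hX : 2 <= X by lia.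
    have hh : 1 * 1 <= (yj - 1) * (X - 1) by apply: leq_mul; lia.
    have : 2 * 1 <= C by apply: leq_mul; rewrite /sB; lia.
    lia.
move: ((xi - 1) * (yj * Y - 1)) ((yi - 1) * (xj * X - 1)) ((xi + yi - 1) * sB) => a b c; lia.
Qed.

Lemma invar (I : finType) (P : pred I) (x y z : I -> nat) :
  (forall a, 0 < x a) -> (forall a, 0 < y a) -> (forall a, x a + y a <= z a + 1) ->
  [/\ 0 < \prod_(a | P a) x a, 0 < \prod_(a | P a) y a &
      \prod_(a | P a) x a + \prod_(a | P a) y a <= \prod_(a | P a) z a + 1].
Proof.
move=> hx hy hxy.
apply: (big_rec3 (fun X Y Z => [/\ 0 < X, 0 < Y & X + Y <= Z + 1])) => //.
move=> i X Y Z _ [h1 h2 h3].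
have := @blk X Y Z (x i) (y i) (z i) 0 0 h1 h2 (hx i) (hy i) ltac:(lia) ltac:(have := hxy i; lia).
rewrite !muln0 !mul0n !addn0 => hh; split; [by rewrite muln_gt0 hx | by rewrite muln_gt0 hy | ].
move: hh; move: ((x i - 1) * (Y - 1) + (y i - 1) * (X - 1)) => c; lia.
Qed.

Lemma prod_ge (I : finType) (P : pred I) (F : I -> nat) l :
  P l -> (forall a, 0 < F a) -> F l <= \prod_(a | P a) F a.
Proof.
move=> hl hF; rewrite (bigD1 l) //=; apply: leq_pmulr; exact: prodn_gt0.
Qed.
Lemma third k (hk : 2 < k) (i j : 'I_k) : exists l : 'I_k, (l != i) && (l != j).
Proof.
have [m [h1 h2 h3]] : exists m, [/\ m < 3, m <> (i : nat) & m <> (j : nat)].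
  case: (boolP ((0 != (i : nat)) && (0 != (j : nat)))) => [/andP[/eqP a /eqP b]|h].
    by exists 0; split; lia.
  case: (boolP ((1 != (i : nat)) && (1 != (j : nat)))) => [/andP[/eqP a /eqP b]|h'].
    by exists 1; split; lia.
  exists 2; move: h h'; rewrite !negb_and !negbK => /orP[] /eqP ? /orP[] /eqP ?; split; lia.
have hm : m < k by lia.
exists (Ordinal hm); apply/andP; split; apply/negP => /eqP /(congr1 val) /= H; lia.
Qed.

Lemma other k (hk : 1 < k) (i : 'I_k) : exists l : 'I_k, l != i.
Proof.
have [m [h1 h2]] : exists m, m < 2 /\ m <> (i : nat).
  case: (eqVneq (i : nat) 0) => [e|e]; [exists 1|exists 0]; move/eqP: e; lia.
have hm : m < k by lia.
exists (Ordinal hm); apply/negP => /eqP /(congr1 val) /= H; lia.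
Qed.

Lemma k2aux n0 d0 r0 n1 d1 r1 : 0 < n0 -> 0 < n1 -> r0 <= d0 -> r1 <= d1 ->
  0 < r0 -> r1 < d1 -> (n0 = 1 -> n1 = 1 -> 2 <= d0 /\ 2 <= d1) ->
  g n0 r0 * g n1 r1 + g n0 (d0 - r0) * g n1 (d1 - r1) < g n0 d0 * g n1 d1.
Proof.
move=> hn0 hn1 hr0 hr1 h0 h1 H.
have s0 := superadd n0 r0 (d0 - r0); rewrite subnKC // in s0.
have s1 := superadd n1 r1 (d1 - r1); rewrite subnKC // in s1.
have a1 := @g_ge n0 r0 hn0. have a2 := @g_ge n0 (d0 - r0) hn0.
have a3 := @g_ge n1 r1 hn1. have a4 := @g_ge n1 (d1 - r1) hn1.
have a5 := @g_ge_n n0 r0 h0. have a6 := @g_ge_n n1 (d1 - r1) ltac:(lia).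
apply: fin2 => //; try lia.
Qed.

(* Families indexed by 'I_k (i.e. i = 0..k-1 stands for 1..k). *)
Theorem lemma2p2 (k : nat) (n d r : 'I_k -> nat)
  (hk : 0 < k)
  (hn : forall i, 0 < n i) (hd : forall i, 0 < d i)
  (hr : forall i, r i <= d i)
  (hsum0 : 0 < \sum_(i < k) r i)
  (hsum1 : \sum_(i < k) r i < \sum_(i < k) d i)
  (hcase :
     (k = 1 /\ forall i, 2 <= n i /\ 2 <= d i /\ ~ (n i = 2 /\ d i = 2)) \/
     (k = 2 /\ ((forall i, n i = 1) -> forall i, 2 <= d i)) \/
     (3 <= k)) :
  \prod_(i < k) 'C(n i + r i, n i) + \prod_(i < k) 'C(n i + (d i - r i), n i)
    < \prod_(i < k) 'C(n i + d i, n i).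
Proof.
suff : \prod_(i < k) g (n i) (r i) + \prod_(i < k) g (n i) (d i - r i)
         < \prod_(i < k) g (n i) (d i) by [].
have hx : forall i, 0 < g (n i) (r i) by move=> i; have := @g_ge (n i) (r i) (hn i); lia.
have hy : forall i, 0 < g (n i) (d i - r i) by move=> i; have := @g_ge (n i) (d i - r i) (hn i); lia.
have hxyz : forall i, g (n i) (r i) + g (n i) (d i - r i) <= g (n i) (d i) + 1.
  by move=> i; have := superadd (n i) (r i) (d i - r i); rewrite subnKC.
have hx2 : forall i, 0 < r i -> 2 <= g (n i) (r i).
  by move=> i h; have := @g_ge_n (n i) (r i) h; have := hn i; lia.
have hy2 : forall i, r i < d i -> 2 <= g (n i) (d i - r i).
  by move=> i h; have := @g_ge_n (n i) (d i - r i) ltac:(lia); have := hn i; lia.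
case: hcase => [[hk1 H]|[[hk2 H]|hk3]].
- subst k; rewrite !big_ord1 in hsum0 hsum1 *.
  have [h1 [h2 h3]] := H ord0.
  apply: case1 => //.
- subst k; rewrite !big_ord_recl !big_ord0 !muln1 in hsum0 hsum1 *.
  rewrite !addn0 in hsum0 hsum1.
  have hab : forall i : 'I_2, i = ord0 \/ i = lift ord0 ord0.
    by case=> [[|[|m]] p] //; [left|right]; apply: val_inj.
  have H' : n ord0 = 1 -> n (lift ord0 ord0) = 1 -> 2 <= d ord0 /\ 2 <= d (lift ord0 ord0).
    by move=> e1 e2; have := H (fun i => ltac:(case: (hab i) => ->; assumption)); move=> h; split; apply: h.
  have [[c1 c2]|[c1 c2]] : (0 < r ord0 /\ r (lift ord0 ord0) < d (lift ord0 ord0)) \/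
     (0 < r (lift ord0 ord0) /\ r ord0 < d ord0).
    have := hr ord0; have := hr (lift ord0 ord0); have := hd ord0; have := hd (lift ord0 ord0); lia.
  + by apply: k2aux.
  + rewrite [X in X + _]mulnC [X in _ + X]mulnC [X in _ < X]mulnC.
    apply: k2aux => // e1 e2; have [] := H' e2 e1; lia.
- have [i0 ri0] : exists i, 0 < r i.
    case: (pickP (fun i => 0 < r i)) => [x hx0|h]; first by exists x.
    by move: hsum0; rewrite big1 // => a _; move: (h a) => /=; case: (r a).
  have [j0 rj0] : exists j, r j < d j.
    case: (pickP (fun i => r i < d i)) => [x hx0|hno]; first by exists x.
    have E : \sum_(i < k) r i = \sum_(i < k) d i.
      apply: eq_bigr => a _; have := hno a; have := hr a; move=> /= hra /negbT.
      rewrite -leqNgt => hda; apply/eqP; by rewrite eqn_leq hra hda.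
    by move: hsum1; rewrite E ltnn.
  have [i [j [hij ri rj]]] : exists i j, [/\ j != i, 0 < r i & r j < d j].
    case: (eqVneq j0 i0) => [e|ne]; last by exists i0, j0.
    subst j0; have [l hl] := @other k ltac:(lia) i0.
    have : 0 < r l \/ r l < d l by have := hd l; lia.
    case=> h; [exists l, i0 | exists i0, l]; split => //.
    by rewrite eq_sym.
  have [l /andP[li lj]] := @third k hk3 i j.
  have Hs : forall F : 'I_k -> nat,
      \prod_(a < k) F a = F i * (F j * \prod_(a < k | (a != i) && (a != j)) F a).
    by move=> F; rewrite (bigD1 i) //= (bigD1 j) //=.
  rewrite !Hs.
  have [p1 p2 p3] := @invar _ (fun a => (a != i) && (a != j)) _ _ _ hx hy hxyz.
  apply: fin3 => //.
  + exact: hx2.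
  + exact: hy2.
  + have : 0 < r l \/ r l < d l by have := hd l; lia.
    case=> h; [left|right].
    * apply: leq_trans (hx2 _ h) _; apply: prod_ge => //; by rewrite li lj.
    * apply: leq_trans (hy2 _ h) _; apply: prod_ge => //; by rewrite li lj.
Qed.
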